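(* Let $(X, M, \ast)$ be a stationary fuzzy metric space (in the sense of George and Veeramani), and write $M(x,y)$ for the constant value of $M(x,y,t)$, $t>0$. Then for every $y\in X$, the function $M_y: X\to\mathbb{R}$, $M_y(x)=M(x,y)$, is $\mathbb{R}$-uniformly continuous; that is, for every $\varepsilon>0$ there exist $s>0$ and $\delta\in(0,1)$ such that for all $x,z\in X$, $M(x,z,s)>1-\delta$ implies $|M_y(x)-M_y(z)|<\varepsilon$.
   Context: A continuous $t$-norm $\ast$ is a continuous binary operation on $[0,1]$ that is associative, commutative, nondecreasing in each argument, and has $1$ as neutral element. A fuzzy metric space (George–Veeramani) is a triple $(X,M,\ast)$ where $X$ is a nonempty set, $\ast$ is a continuous $t$-norm, and $M: X\times X\times(0,+\infty)\to[0,1]$ satisfies, for all $x,y,z\in X$ and $s,t>0$: (GV1) $M(x,y,t)>0$; (GV2) $M(x,y,t)=1$ iff $x=y$; (GV3) $M(x,y,t)=M(y,x,t)$; (GV4) $M(x,y,t)\ast M(y,z,s)\le M(x,z,t+s)$; (GV5) $t\mapsto M(x,y,t)$ is continuous on $(0,+\infty)$. The fuzzy metric $M$ is stationary if for all $x,y\in X$ the function $t\mapsto M(x,y,t)$ is constant. A map $f:X\to\mathbb{R}$ on a fuzzy metric space $(X,M,\ast)$ is $\mathbb{R}$-uniformly continuous if for every $\varepsilon>0$ there exist $s>0$ and $\delta\in(0,1)$ such that $M(x,y,s)>1-\delta$ implies $|f(x)-f(y)|<\varepsilon$. *)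

(* Defs.v *)
From Stdlib Require Import Reals.
Open Scope R_scope.

(* A continuous t-norm on [0,1]: values outside [0,1] are irrelevant; all
   axioms are required on [0,1] only. Continuity is joint continuity on
   [0,1]x[0,1]. *)
Definition in01 (a : R) : Prop := 0 <= a <= 1.

Definition continuous_tnorm (T : R -> R -> R) : Prop :=
  (forall a b, in01 a -> in01 b -> in01 (T a b)) /\
  (forall a b c, in01 a -> in01 b -> in01 c -> T a (T b c) = T (T a b) c) /\
  (forall a b, in01 a -> in01 b -> T a b = T b a) /\
  (forall a b c d, in01 a -> in01 b -> in01 c -> in01 d ->
      a <= c -> b <= d -> T a b <= T c d) /\
  (forall a, in01 a -> T a 1 = a) /\
  (forall a b, in01 a -> in01 b -> forall eps, eps > 0 ->
     exists del, del > 0 /\ forall c d, in01 c -> in01 d ->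
       Rabs (c - a) < del -> Rabs (d - b) < del -> Rabs (T c d - T a b) < eps).

Definition GV_fuzzy_metric {X : Type} (M : X -> X -> R -> R) (T : R -> R -> R)
  : Prop :=
  inhabited X /\ continuous_tnorm T /\
  (forall x y t, t > 0 -> in01 (M x y t)) /\
  (forall x y t, t > 0 -> M x y t > 0) /\
  (forall x y t, t > 0 -> (M x y t = 1 <-> x = y)) /\
  (forall x y t, t > 0 -> M x y t = M y x t) /\
  (forall x y z t s, t > 0 -> s > 0 -> T (M x y t) (M y z s) <= M x z (t + s)) /\
  (forall x y t, t > 0 -> continuity_pt (fun u => M x y u) t).

Definition stationary {X : Type} (M : X -> X -> R -> R) : Prop :=
  forall x y t s, t > 0 -> s > 0 -> M x y t = M x y s.

Definition R_uniformly_continuous {X : Type} (M : X -> X -> R -> R)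
  (f : X -> R) : Prop :=
  forall eps, eps > 0 -> exists s delta, s > 0 /\ 0 < delta < 1 /\
    forall x y, M x y s > 1 - delta -> Rabs (f x - f y) < eps.

(* Main.v *)
Require Import Defs.
From Stdlib Require Import Reals Lra Lia.
Open Scope R_scope.

Lemma grid (T : R -> R -> R) (HT : continuous_tnorm T) (n : nat) (Hn : (0 < n)%nat)
  (e : R) (He : e > 0) : forall k, (k <= n)%nat -> exists d, d > 0 /\
   forall a b, in01 a -> 1 - a < d -> 0 <= b <= INR k / INR n -> T a b > b - / INR n - e.
Proof.
  destruct HT as [Hin [Hass [Hcom [Hmon [Hone Hcont]]]]].
  assert (HnR : 0 < INR n) by (apply lt_0_INR; lia).
  induction k as [|k IH]; intros Hk.
  - exists 1. split; [lra|]. intros a b Ha _ Hb.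
    simpl in Hb. replace (0 / INR n) with 0 in Hb by (field; lra).
    assert (b = 0) by lra. subst b.
    assert (in01 0) by (unfold in01; lra).
    destruct (Hin a 0 Ha H) as [H1 _].
    assert (0 < / INR n) by (apply Rinv_0_lt_compat; lra). lra.
  - destruct (IH ltac:(lia)) as [d [Hd Hd']].
    set (c := INR k / INR n).
    assert (Hkn : INR k <= INR n) by (apply le_INR; lia).
    assert (HSkn : INR (S k) <= INR n) by (apply le_INR; lia).
    rewrite S_INR in HSkn.
    assert (Hc : in01 c).
    { unfold in01, c. split.
      - unfold Rdiv; apply Rmult_le_pos; [apply pos_INR|apply Rlt_le, Rinv_0_lt_compat; lra].
      - apply (Rmult_le_reg_r (INR n)); [lra|]. field_simplify; lra. }
    assert (H1 : in01 1) by (unfold in01; lra).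
    destruct (Hcont 1 c H1 Hc e He) as [del [Hdel Hdel']].
    exists (Rmin d del). split; [apply Rmin_glb_lt; lra|].
    intros a b Ha Had Hb.
    assert (Had1 : 1 - a < d) by (pose proof (Rmin_l d del); lra).
    assert (Had2 : 1 - a < del) by (pose proof (Rmin_r d del); lra).
    destruct (Rle_dec b c) as [Hbc|Hbc].
    + apply Hd'; auto. split; [lra|exact Hbc].
    + assert (Hbe : b <= c + / INR n).
      { rewrite S_INR in Hb. unfold c.
        replace (INR k / INR n + / INR n) with ((INR k + 1) / INR n) by (field; lra).
        lra. }
      assert (Hb01 : in01 b).
      { unfold in01. split; [lra|]. rewrite S_INR in Hb.
        assert ((INR k + 1) / INR n <= 1).
        { apply (Rmult_le_reg_r (INR n)); [lra|]. field_simplify; lra. }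
        lra. }
      assert (Hm : T a c <= T a b).
      { apply Hmon; auto. unfold in01 in *; lra. lra. }
      assert (Habs : Rabs (T a c - T 1 c) < e).
      { apply Hdel'; auto.
        - unfold in01 in Ha. rewrite Rabs_left1; lra.
        - rewrite Rminus_diag, Rabs_R0; lra. }
      rewrite (Hcom 1 c H1 Hc), (Hone c Hc) in Habs.
      apply Rabs_def2 in Habs. lra.
Qed.

Lemma unif (T : R -> R -> R) (HT : continuous_tnorm T) (eps : R) (He : eps > 0) :
  exists d, d > 0 /\ forall a b, in01 a -> in01 b -> 1 - a < d -> T a b > b - eps.
Proof.
  destruct (archimed_cor1 (eps/2) ltac:(lra)) as [n [Hn Hn0]].
  destruct (grid T HT n Hn0 (eps/2) ltac:(lra) n (Nat.le_refl n)) as [d [Hd Hd']].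
  exists d. split; auto. intros a b Ha Hb Had.
  assert (HnR : 0 < INR n) by (apply lt_0_INR; lia).
  assert (INR n / INR n = 1) by (field; lra).
  specialize (Hd' a b Ha Had). rewrite H in Hd'.
  unfold in01 in Hb. specialize (Hd' Hb). lra.
Qed.

(* M(x,y) denotes the constant value, taken as M x y 1. *)
Theorem mainTheorem1 (X : Type) (M : X -> X -> R -> R) (T : R -> R -> R)
  (HM : GV_fuzzy_metric M T) (Hst : stationary M) (y : X) :
  R_uniformly_continuous M (fun x => M x y 1).
Proof.
  destruct HM as [_ [HT [Hin [Hpos [Heq [Hsym [Htri Hc]]]]]]].
  intros eps He.
  destruct (unif T HT (eps/2) ltac:(lra)) as [d [Hd Hd']].
  exists 1, (Rmin d (1/2)). split; [lra|]. split.
  { split; [apply Rmin_glb_lt; lra|]. pose proof (Rmin_r d (1/2)); lra. }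
  intros x z Hxz. simpl.
  assert (Hlt : 1 - M x z 1 < d) by (pose proof (Rmin_l d (1/2)); lra).
  assert (E1 : M x y 1 = M x y (1+1)) by (apply Hst; lra).
  assert (E2 : M z y 1 = M z y (1+1)) by (apply Hst; lra).
  pose proof (Htri x z y 1 1 ltac:(lra) ltac:(lra)) as T1.
  pose proof (Htri z x y 1 1 ltac:(lra) ltac:(lra)) as T2.
  rewrite (Hsym z x 1 ltac:(lra)) in T2.
  pose proof (Hd' (M x z 1) (M z y 1) (Hin x z 1 ltac:(lra)) (Hin z y 1 ltac:(lra)) Hlt).
  pose proof (Hd' (M x z 1) (M x y 1) (Hin x z 1 ltac:(lra)) (Hin x y 1 ltac:(lra)) Hlt).
  apply Rabs_def1; lra.
Qed.
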